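(* Let $\mathbf{K}$ be a field of characteristic different from $2$ and let $A$ be a (not necessarily associative) algebra over $\mathbf{K}$ satisfying, for all $a,b\in A$, the identities $\langle a,a,b\rangle=0$, $\langle a,b,a\rangle=0$ and $\langle a,b,ab\rangle=0$, where $\langle a,b,c\rangle=(ab)c-a(bc)+b(ac)$. Then for all $a,b,c,d\in A$: (a) $\langle a,b,c\rangle$ is skew-symmetric in $a,b,c$; (b) $\langle ab,c,d\rangle+\langle ba,c,d\rangle=0$.
   Context: The product in $A$ is an arbitrary bilinear multiplication; no associativity or commutativity is assumed. *)

(* Defs.v *)
From mathcomp Require Import all_boot all_order all_algebra.
Set Implicit Arguments. Unset Strict Implicit. Unset Printing Implicit Defensive.
Import GRing.Theory.
Local Open Scope ring_scope.

Definition bilinear_mul (K : fieldType) (V : lmodType K) (mul : V -> V -> V) : Prop :=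
  (forall (k : K) (x y z : V), mul (k *: x + y) z = k *: mul x z + mul y z) /\
  (forall (k : K) (x y z : V), mul x (k *: y + z) = k *: mul x y + mul x z).

Definition tri (K : fieldType) (V : lmodType K) (mul : V -> V -> V) (a b c : V) : V :=
  mul (mul a b) c - mul a (mul b c) + mul b (mul a c).

(* Main.v *)
Require Import Defs.
From mathcomp Require Import all_boot all_order all_algebra.
Import GRing.Theory.
Local Open Scope ring_scope.

Lemma aux_rearr (V : zmodType) (p q r s t u : V) :
  (p + q) - (r + s) + (t + u) = (p - r + t) + (q - s + u).
Proof. by rewrite opprD (addrACA p) (addrACA (p - r)). Qed.

Theorem lemma2 (K : fieldType) (V : lmodType K) (mul : V -> V -> V)
  (hK : 2 \notin [pchar K])
  (hmul : bilinear_mul mul)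
  (h1 : forall a b : V, tri mul a a b = 0)
  (h2 : forall a b : V, tri mul a b a = 0)
  (h3 : forall a b : V, tri mul a b (mul a b) = 0) :
  (forall a b c : V,
     tri mul b a c = - tri mul a b c /\
     tri mul a c b = - tri mul a b c /\
     tri mul c b a = - tri mul a b c) /\
  (forall a b c d : V,
     tri mul (mul a b) c d + tri mul (mul b a) c d = 0).
Proof.
case: hmul => hl hr.
have mulDl : forall x y z, mul (x + y) z = mul x z + mul y z.
  by move=> x y z; rewrite -[x]scale1r hl !scale1r.
have mulDr : forall x y z, mul x (y + z) = mul x y + mul x z.
  by move=> x y z; rewrite -[y]scale1r hr !scale1r.
have mul0l : forall z, mul 0 z = 0.
  by move=> z; have E := mulDl 0 0 z; rewrite addr0 in E; apply: (addrI (mul 0 z)); rewrite addr0 -E.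
have mul0r : forall z, mul z 0 = 0.
  by move=> z; have E := mulDr z 0 0; rewrite addr0 in E; apply: (addrI (mul z 0)); rewrite addr0 -E.
have triD1 : forall x y b c, tri mul (x + y) b c = tri mul x b c + tri mul y b c.
  by move=> x y b c; rewrite /tri !(mulDl, mulDr) aux_rearr.
have triD2 : forall a x y c, tri mul a (x + y) c = tri mul a x c + tri mul a y c.
  by move=> a x y c; rewrite /tri !(mulDl, mulDr) aux_rearr.
have triD3 : forall a b x y, tri mul a b (x + y) = tri mul a b x + tri mul a b y.
  by move=> a b x y; rewrite /tri !(mulDl, mulDr) aux_rearr.
have s12 : forall a b c, tri mul b a c = - tri mul a b c.
  move=> a b c; apply/eqP; rewrite -addr_eq0 addrC; apply/eqP.
  have := h1 (a + b) c; rewrite triD1 !triD2 h1 h1 add0r addr0.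
  by [].
have s13 : forall a b c, tri mul c b a = - tri mul a b c.
  move=> a b c; apply/eqP; rewrite -addr_eq0 addrC; apply/eqP.
  have := h2 (a + c) b; rewrite triD1 !triD3 h2 h2 add0r addr0.
  by [].
split.
  move=> a b c; split; first exact: s12.
  split; last exact: s13.
  by rewrite s13 s12 s13 opprK.
have sq : forall a b, mul (mul a a) b = 0.
  by move=> a b; have := h1 a b; rewrite /tri subrK.
have anti : forall a b c, mul (mul a b + mul b a) c = 0.
  move=> a b c; have := sq (a + b) c.
  by rewrite !mulDl !mulDr !mulDl sq sq add0r addr0.
move=> a b c d; rewrite -triD1 /tri anti mul0l.
have -> : mul (mul a b + mul b a) d = 0 by apply: anti.
by rewrite mul0r anti subrr add0r.
Qed.
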